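(* Let $\alpha>1$, $r=\frac12(1-\frac1\alpha)$, let $a,b$ be positive integers with $s=a+b\ge2$, and let $n'_*=\lfloor -\log_r (s-1)\rfloor+1$. Then for every positive even integer $k$ with \[ k\ \ge\ \max\Bigg\{\left\lceil 2\,\frac{(1-r+r^{n'_*})^{s-2}\,[\,(1-r+r^{n'_*})+(s-1)\,]}{(1-r)^{s-2}\,[\,(1-r)+(s-1)(1-r^{n'_*})\,]}+2\right\rceil\Big(\frac{1-r}{r}\Big)^{s-1},\ \ 2\Big(\frac{1-r}{r}\Big)^{s},\ \ 2\Big(\frac1{1-r}\Big)^{s-1}+2\Bigg\}, \] we have \[ \Big[0,\tfrac k2\Big]=\{x_1^ax_2^b+x_3^ax_4^b+\cdots+x_{k-1}^ax_k^b:\ x_1,\dots,x_k\in C_\alpha\}. \]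
   Context: For real $\alpha>1$ let $r=\frac12(1-\frac1\alpha)\in(0,\frac12)$. Define $f_0,f_1:[0,1]\to[0,1]$ by $f_0(x)=rx$, $f_1(x)=rx+1-r$; for $\omega=\sigma_1\cdots\sigma_n\in\{0,1\}^n$ let $f_\omega=f_{\sigma_1}\circ\cdots\circ f_{\sigma_n}$. Let $F_n=\{f_\omega([0,1]):\omega\in\{0,1\}^n\}$ (the level-$n$ basic intervals, each of length $r^n$), $C_n=\bigcup_{I\in F_n}I$, and $C_\alpha=\bigcap_{n\ge1}C_n$ (the middle-$\frac1\alpha$ Cantor set; $C_3$ is the ternary Cantor set). *)

(* Defs.v *)
From Stdlib Require Import Reals Lra Lia ZArith List.
Open Scope R_scope.

Definition ratio (alpha : R) : R := (1 - 1 / alpha) / 2.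

Definition f0 (r x : R) : R := r * x.
Definition f1 (r x : R) : R := r * x + 1 - r.

Fixpoint f_word (r : R) (w : list bool) (x : R) : R :=
  match w with
  | nil => x
  | b :: w' => (if b then f1 r else f0 r) (f_word r w' x)
  end.

Definition in_basic (r : R) (w : list bool) (x : R) : Prop :=
  exists y, 0 <= y <= 1 /\ x = f_word r w y.

Definition C_level (r : R) (n : nat) (x : R) : Prop :=
  exists w : list bool, length w = n /\ in_basic r w x.

Definition Cantor (alpha : R) (x : R) : Prop :=
  forall n : nat, (1 <= n)%nat -> C_level (ratio alpha) n x.

(* floor and ceiling (Int_part x = up x - 1 is the floor) *)
Definition Rfloor (x : R) : Z := (up x - 1)%Z.
Definition Rceil (x : R) : Z := (- Rfloor (- x))%Z.

Definition logb (r y : R) : R := ln y / ln r.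

(* x_1^a x_2^b + x_3^a x_4^b + ... over m pairs (0-indexed: x 0, x 1, ...) *)
Fixpoint pair_sum (x : nat -> R) (a b m : nat) : R :=
  match m with
  | O => 0
  | S m' => pair_sum x a b m' + x (2 * m')%nat ^ a * x (2 * m' + 1)%nat ^ b
  end.

(* Main.v *)
Require Import Defs.
From Stdlib Require Import Reals ZArith Arith Lra Lia List Psatz ClassicalEpsilon.
Open Scope R_scope.

Definition Lw (r : R) (w : list bool) : R := f_word r w 0.

Lemma fw_affine r w y : f_word r w y = Lw r w + r ^ length w * y.
Proof.
  unfold Lw; induction w as [|bb w IH]; simpl.
  - ring.
  - rewrite IH. destruct bb; unfold f0, f1; ring.
Qed.

Lemma fw_app r w v y : f_word r (w ++ v) y = f_word r w (f_word r v y).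
Proof. induction w as [|bb w IH]; simpl; [reflexivity| now rewrite IH]. Qed.

Lemma fw_range r w y : 0 < r < 1 -> 0 <= y <= 1 -> 0 <= f_word r w y <= 1.
Proof.
  intros Hr Hy; induction w as [|bb w IH]; simpl; auto.
  destruct bb; unfold f0, f1; split; nra.
Qed.

Lemma Lw_bounds r w : 0 < r < 1 -> 0 <= Lw r w /\ Lw r w + r ^ length w <= 1.
Proof.
  intros Hr. split.
  - apply (fw_range r w 0); lra.
  - pose proof (fw_range r w 1 Hr ltac:(lra)). rewrite fw_affine in H. lra.
Qed.

Lemma Lw_app r w v : 0 < r < 1 ->
  Lw r w <= Lw r (w ++ v) /\ Lw r (w ++ v) + r ^ length (w ++ v) <= Lw r w + r ^ length w.
Proof.
  intros Hr. destruct (Lw_bounds r v Hr) as [H1 H2].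
  assert (E: forall y, f_word r (w ++ v) y = Lw r w + r ^ length w * (Lw r v + r ^ length v * y)).
  { intro y. rewrite fw_app, fw_affine, (fw_affine r v). reflexivity. }
  pose proof (pow_lt r (length w) ltac:(lra)).
  pose proof (pow_lt r (length v) ltac:(lra)).
  assert (A0 := E 0). assert (A1 := E 1).
  rewrite (fw_affine r (w++v) 0) in A0. rewrite (fw_affine r (w++v) 1) in A1.
  split; nra.
Qed.

Lemma Lw_snoc r w bb : Lw r (w ++ bb :: nil) = Lw r w + r ^ length w * (if bb then 1 - r else 0).
Proof.
  unfold Lw at 1. rewrite fw_app. rewrite fw_affine. simpl. destruct bb; unfold f0, f1; ring.
Qed.

Lemma len_snoc (w : list bool) bb : length (w ++ bb :: nil) = S (length w).
Proof. rewrite length_app; simpl; lia. Qed.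

Definition inC (r x : R) : Prop := forall N, C_level r N x.

Lemma in_basic_prefix r u v x : 0 < r < 1 -> in_basic r (u ++ v) x -> in_basic r u x.
Proof.
  intros Hr [z [Hz Hx]]. exists (f_word r v z). split.
  - apply fw_range; auto.
  - rewrite Hx, fw_app; reflexivity.
Qed.

Lemma in_basic_long r w x N : 0 < r < 1 -> (N <= length w)%nat -> in_basic r w x -> C_level r N x.
Proof.
  intros Hr HN Hb. exists (firstn N w). split.
  - rewrite length_firstn; lia.
  - apply (in_basic_prefix r _ (skipn N w)); auto. now rewrite firstn_skipn.
Qed.

Lemma in_basic_of_interval r w x : 0 < r < 1 -> Lw r w <= x <= Lw r w + r ^ length w -> in_basic r w x.
Proof.
  intros Hr Hx. pose proof (pow_lt r (length w) ltac:(lra)).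
  exists ((x - Lw r w) / r ^ length w). split.
  - split.
    + apply Rmult_le_pos; [lra| left; apply Rinv_0_lt_compat; lra].
    + apply (Rmult_le_reg_r (r ^ length w)); auto. unfold Rdiv. rewrite Rmult_assoc, Rinv_l by lra. lra.
  - rewrite fw_affine. field. lra.
Qed.

Lemma fw_repeat_true r N : f_word r (repeat true N) 1 = 1.
Proof. induction N; simpl; auto. rewrite IHN; unfold f1; ring. Qed.
Lemma fw_repeat_false r N : f_word r (repeat false N) 0 = 0.
Proof. induction N; simpl; auto. rewrite IHN; unfold f0; ring. Qed.

Lemma inC_1 r : inC r 1.
Proof. intro N. exists (repeat true N). split; [apply repeat_length|]. exists 1. split; [lra|]. now rewrite fw_repeat_true. Qed.
Lemma inC_0 r : inC r 0.
Proof. intro N. exists (repeat false N). split; [apply repeat_length|]. exists 0. split; [lra|]. now rewrite fw_repeat_false. Qed.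

Lemma inC_range r x : 0 < r < 1 -> inC r x -> 0 <= x <= 1.
Proof.
  intros Hr H. destruct (H 0%nat) as [w [Hl [z [Hz Hx]]]]. destruct w; [|simpl in Hl; lia].
  simpl in Hx. lra.
Qed.

Lemma inC_scale r x : 0 < r < 1 -> inC r x -> inC r (r * x).
Proof.
  intros Hr H N. destruct N as [|N].
  - exists nil. split; auto. exists (r*x). pose proof (inC_range r x Hr H). split; [nra| reflexivity].
  - destruct (H N) as [w [Hl [z [Hz Hx]]]]. exists (false :: w). split; [simpl; lia|].
    exists z. split; auto. simpl. unfold f0. now rewrite Hx.
Qed.

Lemma inC_scale_pow r x n : 0 < r < 1 -> inC r x -> inC r (r ^ n * x).
Proof.
  intros Hr H. induction n; simpl.
  - now rewrite Rmult_1_l.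
  - rewrite Rmult_assoc. now apply inC_scale.
Qed.

Lemma pow_le1 y n : 0 <= y <= 1 -> y ^ n <= 1.
Proof. intro H. rewrite <- (pow1 n). apply pow_incr; lra. Qed.

Lemma pow_diff_upper e x y : 0 <= y <= x -> x <= 1 -> x ^ S e - y ^ S e <= INR (S e) * (x - y).
Proof.
  intros Hy Hx. induction e.
  - simpl. lra.
  - assert (E: x ^ S (S e) - y ^ S (S e) = x * (x ^ S e - y ^ S e) + y ^ S e * (x - y)) by (simpl; ring).
    rewrite E. rewrite (S_INR (S e)).
    assert (0 <= x ^ S e - y ^ S e) by (pose proof (pow_incr y x (S e) Hy); lra).
    assert (y ^ S e <= 1) by (apply pow_le1; lra).
    assert (0 <= y ^ S e) by (apply pow_le; lra).
    nra.
Qed.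

Lemma pow_diff_lower e lo x y : 0 <= lo <= y -> y <= x -> INR (S e) * lo ^ e * (x - y) <= x ^ S e - y ^ S e.
Proof.
  intros Hy Hx. induction e.
  - simpl. lra.
  - assert (E: x ^ S (S e) - y ^ S (S e) = x * (x ^ S e - y ^ S e) + y ^ S e * (x - y)) by (simpl; ring).
    rewrite E. rewrite (S_INR (S e)).
    assert (lo ^ S e <= y ^ S e) by (apply pow_incr; lra).
    assert (0 <= lo ^ e) by (apply pow_le; lra).
    assert (0 <= INR (S e)) by apply pos_INR.
    assert (INR (S e) * lo ^ e * (x - y) * lo <= INR (S e) * lo ^ e * (x - y) * x).
    { apply Rmult_le_compat_l; [|lra]. apply Rmult_le_pos; [apply Rmult_le_pos|]; lra. }
    simpl (lo ^ S e) in *. nra.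
Qed.

Fixpoint ssum (f : nat -> R) (p : nat) : R :=
  match p with O => 0 | S p' => ssum f p' + f p' end.

Lemma ssum_ext f g p : (forall i, (i < p)%nat -> f i = g i) -> ssum f p = ssum g p.
Proof. induction p; simpl; intros H; auto. rewrite IHp by (intros; apply H; lia). now rewrite H by lia. Qed.

Lemma ssum_le f g p : (forall i, (i < p)%nat -> f i <= g i) -> ssum f p <= ssum g p.
Proof. induction p; simpl; intros H; [lra|]. pose proof (H p ltac:(lia)). pose proof (IHp ltac:(intros; apply H; lia)). lra. Qed.

Lemma ssum_minus f g p : ssum g p - ssum f p = ssum (fun i => g i - f i) p.
Proof. induction p; simpl; [lra|]. rewrite <- IHp. ring. Qed.

Lemma ssum_const c p : ssum (fun _ => c) p = INR p * c.
Proof. induction p; simpl ssum; [simpl; ring|]. rewrite IHp, S_INR. ring. Qed.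

Lemma ssum_scale c f p : ssum (fun i => c * f i) p = c * ssum f p.
Proof. induction p; simpl; [ring|]. rewrite IHp; ring. Qed.

Definition upd {A} (W : nat -> A) (j : nat) (v : A) : nat -> A := fun i => if Nat.eqb i j then v else W i.

Lemma ssum_point f g p j : (j < p)%nat -> (forall i, (i < p)%nat -> i <> j -> f i = g i) ->
  ssum f p - f j = ssum g p - g j.
Proof.
  induction p; intros Hj H; [lia|]. simpl.
  destruct (Nat.eq_dec j p) as [->|Hne].
  - rewrite (ssum_ext f g p) by (intros; apply H; lia). ring.
  - rewrite (H p) by lia. assert (ssum f p - f j = ssum g p - g j) by (apply IHp; [lia| intros; apply H; lia]). lra.
Qed.

Lemma ssum_excl f p j mu : (j < p)%nat -> (forall i, (i < p)%nat -> mu <= f i) ->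
  f j + INR (p - 1) * mu <= ssum f p.
Proof.
  induction p; intros Hj H; [lia|]. simpl ssum.
  destruct (Nat.eq_dec j p) as [->|Hne].
  - replace (S p - 1)%nat with p by lia.
    assert (INR p * mu <= ssum f p). { rewrite <- ssum_const. apply ssum_le. intros; apply H; lia. }
    lra.
  - assert (f j + INR (p - 1) * mu <= ssum f p) by (apply IHp; [lia| intros; apply H; lia]).
    replace (S p - 1)%nat with (S (p - 1)) by lia. rewrite S_INR. pose proof (H p ltac:(lia)). lra.
Qed.

Lemma ssum_tail f p m : (p <= m)%nat -> (forall i, (p <= i)%nat -> f i = 0) -> ssum f m = ssum f p.
Proof.
  intros Hpm H. induction m; [replace p with 0%nat by lia; reflexivity|].
  destruct (Nat.eq_dec p (S m)) as [->|Hne]; [reflexivity|].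
  simpl. rewrite IHm by lia. rewrite H by lia. ring.
Qed.

Lemma zero_lim d C r : 0 <= r < 1 -> (forall n, Rabs d <= C * r ^ n) -> d = 0.
Proof.
  intros Hr H. destruct (Req_dec d 0) as [|Hd]; auto. exfalso.
  assert (Hpos: 0 < Rabs d) by (apply Rabs_pos_lt; auto).
  assert (HC: 0 <= C). { specialize (H 0%nat). simpl in H. lra. }
  destruct (pow_lt_1_zero r ltac:(rewrite Rabs_right; lra) (Rabs d / (C + 1))) as [N HN].
  { apply Rdiv_lt_0_compat; lra. }
  specialize (HN N (Nat.le_refl N)). rewrite Rabs_right in HN by (apply Rle_ge, pow_le; lra).
  specialize (H N).
  assert (C * r ^ N <= (C+1) * r^N) by (pose proof (pow_le r N ltac:(lra)); nra).
  assert ((C+1) * r ^ N < (C+1) * (Rabs d / (C+1))) by (apply Rmult_lt_compat_l; lra).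
  replace ((C+1) * (Rabs d / (C+1))) with (Rabs d) in H1 by (field; lra). lra.
Qed.

Definition LoS r e' (W : nat -> list bool) p := ssum (fun i => (Lw r (W i)) ^ S e') p.
Definition HiS r e' (W : nat -> list bool) p := ssum (fun i => (Lw r (W i) + r ^ length (W i)) ^ S e') p.

Lemma pow_anti r n m : 0 <= r <= 1 -> (n <= m)%nat -> r ^ m <= r ^ n.
Proof.
  intros Hr H. replace m with (n + (m - n))%nat by lia. rewrite pow_add.
  pose proof (pow_le r n ltac:(lra)). pose proof (pow_le1 r (m - n) Hr). pose proof (pow_le r (m-n) ltac:(lra)). nra.
Qed.

Lemma len_lower r e' lo w N : 0 < r < 1 -> 0 <= lo <= Lw r w -> (length w <= S N)%nat ->
  INR (S e') * lo ^ e' * r ^ S N <= (Lw r w + r ^ length w) ^ S e' - (Lw r w) ^ S e'.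
Proof.
  intros Hr Hlo Hl.
  assert (Hp: 0 <= r ^ length w) by (apply pow_le; lra).
  pose proof (pow_diff_lower e' lo (Lw r w + r ^ length w) (Lw r w) Hlo ltac:(lra)).
  assert (r ^ S N <= r ^ length w) by (apply pow_anti; lra || lia).
  assert (0 <= INR (S e') * lo ^ e') by (apply Rmult_le_pos; [apply pos_INR| apply pow_le; lra]).
  replace (Lw r w + r ^ length w - Lw r w) with (r ^ length w) in H by ring.
  nra.
Qed.

Lemma round_inner r e' lo p0 y N (W : nat -> list bool) :
  0 < r < 1/2 -> 0 <= lo -> 1 - 2 * r <= INR p0 * lo ^ e' * r ->
  (forall i, (i < S p0)%nat -> length (W i) = N /\ lo <= Lw r (W i)) ->
  LoS r e' W (S p0) <= y <= HiS r e' W (S p0) ->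
  forall j, (j <= S p0)%nat -> exists W',
    (forall i, (i < S p0)%nat -> ((i < j)%nat -> exists bb, W' i = W i ++ bb :: nil) /\ ((j <= i)%nat -> W' i = W i))
    /\ LoS r e' W' (S p0) <= y <= HiS r e' W' (S p0).
Proof.
  intros Hr Hlo Hcond HW Hy j. induction j as [|j IH]; intros Hj.
  - exists W. split; auto. intros i Hi. split; [lia| auto].
  - destruct (IH ltac:(lia)) as [W' [HW' Hy']].
    set (p := S p0) in *.
    set (e := S e').
    set (c := Lw r (W j)). set (h := r ^ N).
    assert (HWj : W' j = W j) by (apply (HW' j ltac:(lia)); lia).
    destruct (HW j ltac:(lia)) as [HlenJ HloJ].
    destruct (Lw_bounds r (W j) ltac:(lra)) as [Hc0 Hc1]. rewrite HlenJ in Hc1. fold c h in Hc0, Hc1.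
    assert (Hh: 0 < h) by (apply pow_lt; lra).
    assert (HW'i: forall i, (i < p)%nat -> (length (W' i) <= S N)%nat /\ lo <= Lw r (W' i)).
    { intros i Hi. destruct (HW i Hi) as [Hl Hlo'].
      destruct (Nat.lt_ge_cases i j) as [Hij|Hij].
      - destruct (proj1 (HW' i Hi) Hij) as [bb Hb]. rewrite Hb. rewrite len_snoc. split; [lia|].
        pose proof (Lw_app r (W i) (bb :: nil) ltac:(lra)). lra.
      - rewrite (proj2 (HW' i Hi) Hij). split; [lia| lra]. }
    assert (Hkey: (c + h) ^ e - c ^ e + ((c + (1 - r) * h) ^ e - (c + r * h) ^ e)
                  <= HiS r e' W' p - LoS r e' W' p).
    { unfold HiS, LoS. rewrite ssum_minus.
      pose proof (ssum_excl (fun i => (Lw r (W' i) + r ^ length (W' i)) ^ S e' - Lw r (W' i) ^ S e') p j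
                    (INR (S e') * lo ^ e' * r ^ S N) ltac:(lia)) as Hex.
      cbv beta in Hex.
      assert (Hmu: forall i, (i < p)%nat -> INR (S e') * lo ^ e' * r ^ S N <=
                  (Lw r (W' i) + r ^ length (W' i)) ^ S e' - Lw r (W' i) ^ S e').
      { intros i Hi. destruct (HW'i i Hi). apply len_lower; auto; lra. }
      specialize (Hex Hmu). rewrite HWj, HlenJ in Hex. fold c h in Hex.
      assert (Hgap: (c + (1 - r) * h) ^ e - (c + r * h) ^ e <= INR e * ((c + (1 - r) * h) - (c + r * h))).
      { apply pow_diff_upper; nra. }
      assert (INR e * ((1 - 2 * r) * h) <= INR (p - 1) * (INR (S e') * lo ^ e' * r ^ S N)).
      { replace (p - 1)%nat with p0 by (unfold p; lia). simpl (r ^ S N). fold h.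
        assert (0 <= INR e) by apply pos_INR. fold e.
        assert (INR e * h * (1 - 2 * r) <= INR e * h * (INR p0 * lo ^ e' * r)).
        { apply Rmult_le_compat_l; [nra| lra]. }
        nra. }
      fold e in Hex. fold e in H. fold e. replace (INR e * (c + (1 - r) * h - (c + r * h))) with (INR e * ((1 - 2 * r) * h)) in Hgap by ring. lra. }
    set (W0 := upd W' j (W j ++ false :: nil)).
    set (W1 := upd W' j (W j ++ true :: nil)).
    assert (L0 : Lw r (W j ++ false :: nil) = c) by (rewrite Lw_snoc; fold c; rewrite HlenJ; ring).
    assert (L1 : Lw r (W j ++ true :: nil) = c + (1 - r) * h) by (rewrite Lw_snoc; fold c; rewrite HlenJ; fold h; ring).
    assert (R0 : r ^ length (W j ++ false :: nil) = r * h) by (rewrite len_snoc, HlenJ; reflexivity).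
    assert (R1 : r ^ length (W j ++ true :: nil) = r * h) by (rewrite len_snoc, HlenJ; reflexivity).
    assert (Hupd' : forall (F : list bool -> R) v, ssum (fun i => F (upd W' j v i)) p
                     = ssum (fun i => F (W' i)) p - F (W' j) + F v).
    { intros F v.
      assert (X: ssum (fun i => F (upd W' j v i)) p - F (upd W' j v j) = ssum (fun i => F (W' i)) p - F (W' j)).
      { apply (ssum_point (fun i => F (upd W' j v i)) (fun i => F (W' i)) p j ltac:(lia)).
        intros i Hi Hne. unfold upd. rewrite (proj2 (Nat.eqb_neq i j) Hne). reflexivity. }
      assert (E: upd W' j v j = v) by (unfold upd; now rewrite Nat.eqb_refl).
      rewrite E in X. lra. }
    assert (Lo0 : LoS r e' W0 p = LoS r e' W' p).
    { unfold LoS, W0. rewrite (Hupd' (fun w => Lw r w ^ S e')). rewrite HWj, L0. fold c. ring. }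
    assert (Hi0 : HiS r e' W0 p = HiS r e' W' p - (c + h) ^ e + (c + r * h) ^ e).
    { unfold HiS, W0. rewrite (Hupd' (fun w => (Lw r w + r ^ length w) ^ S e')). rewrite HWj, L0, R0, HlenJ. fold c h e. ring. }
    assert (Lo1 : LoS r e' W1 p = LoS r e' W' p - c ^ e + (c + (1 - r) * h) ^ e).
    { unfold LoS, W1. rewrite (Hupd' (fun w => Lw r w ^ S e')). rewrite HWj, L1. fold c e. ring. }
    assert (Hi1 : HiS r e' W1 p = HiS r e' W' p).
    { unfold HiS, W1. rewrite (Hupd' (fun w => (Lw r w + r ^ length w) ^ S e')). rewrite HWj, L1, R1, HlenJ. fold c h.
      replace (c + (1 - r) * h + r * h) with (c + h) by ring. ring. }
    assert (Hinv: forall v bb, v = W j ++ bb :: nil -> forall i, (i < p)%nat ->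
              ((i < S j)%nat -> exists bb0, upd W' j v i = W i ++ bb0 :: nil) /\ ((S j <= i)%nat -> upd W' j v i = W i)).
    { intros v bb Hv i Hi. unfold upd. destruct (Nat.eqb_spec i j) as [->|Hne].
      - split; [intros; exists bb; auto| lia].
      - split.
        + intros Hij. apply (proj1 (HW' i Hi)). lia.
        + intros Hij. apply (proj2 (HW' i Hi)). lia. }
    destruct (Rle_or_lt y (HiS r e' W0 p)) as [Hle|Hlt].
    + exists W0. split; [apply (Hinv _ false eq_refl)|]. lra.
    + exists W1. split; [apply (Hinv _ true eq_refl)|]. lra.
Qed.

Definition PreW r e' lo p y (W : nat -> list bool) : Prop :=
  exists N, (forall i, (i < p)%nat -> length (W i) = N /\ lo <= Lw r (W i)) /\ LoS r e' W p <= y <= HiS r e' W p.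
Definition StepW r e' p y (W W' : nat -> list bool) : Prop :=
  (forall i, (i < p)%nat -> exists bb, W' i = W i ++ bb :: nil) /\ LoS r e' W' p <= y <= HiS r e' W' p.

Definition stepF r e' lo p y (W : nat -> list bool) : nat -> list bool :=
  epsilon (inhabits W) (fun W' => PreW r e' lo p y W -> StepW r e' p y W W').

Fixpoint seqW r e' lo p y (w0 : list bool) (n : nat) : nat -> list bool :=
  match n with
  | O => fun _ => w0
  | S n => stepF r e' lo p y (seqW r e' lo p y w0 n)
  end.

Lemma stepF_spec r e' lo p0 y W :
  0 < r < 1/2 -> 0 <= lo -> 1 - 2 * r <= INR p0 * lo ^ e' * r ->
  PreW r e' lo (S p0) y W -> StepW r e' (S p0) y W (stepF r e' lo (S p0) y W).
Proof.
  intros Hr Hlo Hc Hpre. unfold stepF.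
  apply (epsilon_spec (inhabits W) (fun W' => PreW r e' lo (S p0) y W -> StepW r e' (S p0) y W W')); auto.
  destruct Hpre as [N [HW Hy]].
  destruct (round_inner r e' lo p0 y N W Hr Hlo Hc HW Hy (S p0) (Nat.le_refl _)) as [W' [H1 H2]].
  exists W'. intros _. split; auto. intros i Hi. apply (proj1 (H1 i Hi)). lia.
Qed.

Lemma seqW_inv r e' p0 y w0 :
  0 < r < 1/2 -> 1 - 2 * r <= INR p0 * (Lw r w0) ^ e' * r ->
  LoS r e' (fun _ => w0) (S p0) <= y <= HiS r e' (fun _ => w0) (S p0) ->
  forall n, (forall i, (i < S p0)%nat -> length (seqW r e' (Lw r w0) (S p0) y w0 n i) = (length w0 + n)%nat
                          /\ Lw r w0 <= Lw r (seqW r e' (Lw r w0) (S p0) y w0 n i))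
     /\ LoS r e' (seqW r e' (Lw r w0) (S p0) y w0 n) (S p0) <= y <= HiS r e' (seqW r e' (Lw r w0) (S p0) y w0 n) (S p0).
Proof.
  intros Hr Hc Hy0. assert (Hlo: 0 <= Lw r w0) by (apply Lw_bounds; lra).
  induction n as [|n [IH1 IH2]].
  - simpl. split; auto. intros; split; [lia| lra].
  - simpl seqW.
    assert (Hpre: PreW r e' (Lw r w0) (S p0) y (seqW r e' (Lw r w0) (S p0) y w0 n)).
    { exists (length w0 + n)%nat. split; auto. }
    destruct (stepF_spec r e' (Lw r w0) p0 y _ Hr Hlo Hc Hpre) as [H1 H2].
    split; auto. intros i Hi. destruct (H1 i Hi) as [bb Hb]. rewrite Hb.
    destruct (IH1 i Hi) as [Hl Hl2]. rewrite len_snoc, Hl. split; [lia|].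
    pose proof (Lw_app r (seqW r e' (Lw r w0) (S p0) y w0 n i) (bb :: nil) ltac:(lra)). lra.
Qed.

Lemma seqW_step r e' p0 y w0 :
  0 < r < 1/2 -> 1 - 2 * r <= INR p0 * (Lw r w0) ^ e' * r ->
  LoS r e' (fun _ => w0) (S p0) <= y <= HiS r e' (fun _ => w0) (S p0) ->
  forall n i, (i < S p0)%nat -> exists bb, seqW r e' (Lw r w0) (S p0) y w0 (S n) i = seqW r e' (Lw r w0) (S p0) y w0 n i ++ bb :: nil.
Proof.
  intros Hr Hc Hy0 n. assert (Hlo: 0 <= Lw r w0) by (apply Lw_bounds; lra).
  destruct (seqW_inv r e' p0 y w0 Hr Hc Hy0 n) as [H1 H2].
  assert (Hpre: PreW r e' (Lw r w0) (S p0) y (seqW r e' (Lw r w0) (S p0) y w0 n)).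
  { exists (length w0 + n)%nat. split; auto. }
  destruct (stepF_spec r e' (Lw r w0) p0 y _ Hr Hlo Hc Hpre) as [H3 _]. exact H3.
Qed.

Lemma seqW_nest r e' p0 y w0 :
  0 < r < 1/2 -> 1 - 2 * r <= INR p0 * (Lw r w0) ^ e' * r ->
  LoS r e' (fun _ => w0) (S p0) <= y <= HiS r e' (fun _ => w0) (S p0) ->
  forall n d i, (i < S p0)%nat -> exists v, seqW r e' (Lw r w0) (S p0) y w0 (n + d) i = seqW r e' (Lw r w0) (S p0) y w0 n i ++ v.
Proof.
  intros Hr Hc Hy0 n d i Hi. induction d as [|d [v Hv]].
  - exists nil. rewrite Nat.add_0_r, app_nil_r. reflexivity.
  - destruct (seqW_step r e' p0 y w0 Hr Hc Hy0 (n + d) i Hi) as [bb Hb].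
    exists (v ++ bb :: nil). rewrite Nat.add_succ_r. rewrite Hb, Hv. now rewrite app_assoc.
Qed.

Lemma mach r e' w0 p0 y :
  0 < r < 1/2 -> 1 - 2 * r <= INR p0 * (Lw r w0) ^ e' * r ->
  INR (S p0) * (Lw r w0) ^ S e' <= y <= INR (S p0) * (Lw r w0 + r ^ length w0) ^ S e' ->
  exists u : nat -> R, (forall i, inC r (u i)) /\ (forall i, (S p0 <= i)%nat -> u i = 0)
     /\ y = ssum (fun i => u i ^ S e') (S p0).
Proof.
  intros Hr Hc Hy.
  assert (Hy0: LoS r e' (fun _ => w0) (S p0) <= y <= HiS r e' (fun _ => w0) (S p0)).
  { unfold LoS, HiS. rewrite !ssum_const. exact Hy. }
  set (p := S p0) in *.
  set (Sq := seqW r e' (Lw r w0) p y w0).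
  assert (Hr1 : 0 < r < 1) by lra.
  set (E := fun i z => exists n, z = Lw r (Sq n i)).
  assert (Hb : forall i, bound (E i)).
  { intro i. exists 1. intros z [n ->]. pose proof (Lw_bounds r (Sq n i) Hr1). pose proof (pow_le r (length (Sq n i)) ltac:(lra)). lra. }
  assert (Hne : forall i, exists z, E i z) by (intro i; exists (Lw r (Sq 0%nat i)); exists 0%nat; reflexivity).
  set (xs := fun i => proj1_sig (completeness (E i) (Hb i) (Hne i))).
  assert (Hxs : forall i, is_lub (E i) (xs i)) by (intro i; unfold xs; destruct completeness; auto).
  assert (Hub : forall i n n', (i < p)%nat -> Lw r (Sq n' i) <= Lw r (Sq n i) + r ^ length (Sq n i)).
  { intros i n n' Hi. pose proof (pow_le r (length (Sq n i)) ltac:(lra)).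
    destruct (Nat.le_ge_cases n' n) as [Hn|Hn].
    - destruct (seqW_nest r e' p0 y w0 Hr Hc Hy0 n' (n - n') i Hi) as [v Hv].
      replace (n' + (n - n'))%nat with n in Hv by lia. fold p Sq in Hv. rewrite Hv.
      pose proof (Lw_app r (Sq n' i) v Hr1). pose proof (pow_le r (length (Sq n' i ++ v)) ltac:(lra)). lra.
    - destruct (seqW_nest r e' p0 y w0 Hr Hc Hy0 n (n' - n) i Hi) as [v Hv].
      replace (n + (n' - n))%nat with n' in Hv by lia. fold p Sq in Hv. rewrite Hv.
      pose proof (Lw_app r (Sq n i) v Hr1). pose proof (pow_le r (length (Sq n i ++ v)) ltac:(lra)). lra. }
  assert (Hx : forall i n, (i < p)%nat -> Lw r (Sq n i) <= xs i <= Lw r (Sq n i) + r ^ length (Sq n i)).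
  { intros i n Hi. destruct (Hxs i) as [H1 H2]. split.
    - apply H1. exists n; reflexivity.
    - apply H2. intros z [n' ->]. apply Hub; auto. }
  assert (Hinv := seqW_inv r e' p0 y w0 Hr Hc Hy0). fold p Sq in Hinv.
  exists (fun i => if Nat.ltb i p then xs i else 0). split; [|split].
  - intro i. destruct (Nat.ltb_spec i p) as [Hi|Hi]; [|apply inC_0].
    intro N. apply (in_basic_long r (Sq N i)); auto.
    + destruct (proj1 (Hinv N) i Hi) as [Hl _]. lia.
    + apply in_basic_of_interval; auto.
  - intros i Hi. destruct (Nat.ltb_spec i p); [lia| reflexivity].
  - rewrite (ssum_ext _ (fun i => xs i ^ S e')) by (intros i Hi; destruct (Nat.ltb_spec i p); [reflexivity| lia]).
    set (T := ssum (fun i => xs i ^ S e') p).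
    apply Rminus_diag_uniq. apply (zero_lim _ (INR p * INR (S e')) r ltac:(lra)).
    intro n. destruct (Hinv n) as [Hl Hyn].
    assert (HT: LoS r e' (Sq n) p <= T <= HiS r e' (Sq n) p).
    { unfold LoS, HiS, T. split; apply ssum_le; intros i Hi; apply pow_incr;
        destruct (Hx i n Hi); pose proof (Lw_bounds r (Sq n i) Hr1); lra. }
    assert (HW: HiS r e' (Sq n) p - LoS r e' (Sq n) p <= INR p * INR (S e') * r ^ n).
    { unfold HiS, LoS. rewrite ssum_minus. rewrite Rmult_assoc, <- ssum_const. apply ssum_le.
      intros i Hi. destruct (Hl i Hi) as [Hli _]. pose proof (Lw_bounds r (Sq n i) Hr1).
      pose proof (pow_le r (length (Sq n i)) ltac:(lra)).
      eapply Rle_trans; [apply pow_diff_upper; lra|].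
      replace (Lw r (Sq n i) + r ^ length (Sq n i) - Lw r (Sq n i)) with (r ^ length (Sq n i)) by ring.
      apply Rmult_le_compat_l; [apply pos_INR|]. apply pow_anti; lra || lia. }
    unfold Rabs. destruct (Rcase_abs (y - T)); lra.
Qed.

Lemma scale_find q M y : 0 < q < 1 -> 0 < y <= M -> exists n, q ^ S n * M < y <= q ^ n * M.
Proof.
  intros Hq Hy.
  destruct (pow_lt_1_zero q ltac:(rewrite Rabs_right; lra) (y / M)) as [N HN].
  { apply Rdiv_lt_0_compat; lra. }
  specialize (HN N (Nat.le_refl N)). rewrite Rabs_right in HN by (apply Rle_ge, pow_le; lra).
  assert (HNy: q ^ N * M < y).
  { apply (Rmult_lt_compat_r M) in HN; [|lra]. unfold Rdiv in HN. rewrite Rmult_assoc, Rinv_l in HN by lra. lra. }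
  clear HN. induction N as [|N IH].
  - simpl in HNy. lra.
  - destruct (Rle_or_lt y (q ^ N * M)) as [H|H].
    + exists N. split; auto.
    + apply IH; auto.
Qed.

Lemma pick_p (c Y : R) (P m : nat) : (forall q, (P <= q)%nat -> (INR q + 1) * c <= INR q) ->
  INR P * c <= Y -> Y <= INR m -> (P <= m)%nat ->
  exists p, (P <= p <= m)%nat /\ INR p * c <= Y <= INR p.
Proof.
  intros Hq HP HY Hm.
  assert (forall d, Y <= INR (P + d) -> exists p, (P <= p <= P + d)%nat /\ INR p * c <= Y <= INR p).
  { induction d as [|d IH]; intros Hd.
    - exists P. rewrite Nat.add_0_r in Hd. split; [lia| lra].
    - destruct (Rle_or_lt (INR (P + S d) * c) Y) as [H|H].
      + exists (P + S d)%nat. split; [lia| lra].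
      + destruct IH as [p [Hp1 Hp2]].
        * specialize (Hq (P + d)%nat ltac:(lia)). rewrite Nat.add_succ_r, S_INR in H. lra.
        * exists p. split; [lia| lra]. }
  destruct (H (m - P)%nat) as [p [Hp1 Hp2]]. { replace (P + (m - P))%nat with m by lia. auto. }
  exists p. split; [lia| auto].
Qed.

Lemma core_e1 r m y : 0 < r < 1/2 -> (1 <= m)%nat -> 1 - 2 * r <= (INR m - 1) * r ->
  0 <= y <= INR m -> exists u : nat -> R, (forall i, inC r (u i)) /\ y = ssum (fun i => u i ^ 1) m.
Proof.
  intros Hr Hm Hc Hy. destruct m as [|m0]; [lia|].
  destruct (mach r 0 nil m0 y Hr) as [u [H1 [_ H3]]].
  - rewrite S_INR in Hc. simpl. lra.
  - replace (Lw r nil) with 0 by reflexivity. replace (r ^ length (@nil bool)) with 1 by reflexivity. replace ((0:R)^1) with 0 by ring. replace ((0 + 1)^1) with 1 by ring. lra.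
  - exists u; auto.
Qed.

Lemma pow_lt_base x y n : 0 <= x < y -> x ^ S n < y ^ S n.
Proof.
  intros H. induction n.
  - simpl. lra.
  - change (x ^ S (S n)) with (x * x ^ S n). change (y ^ S (S n)) with (y * y ^ S n).
    pose proof (pow_le x (S n) ltac:(lra)). nra.
Qed.

Lemma core_e2 r e' P0 m y : 0 < r < 1/2 ->
  1 - 2 * r <= INR P0 * (1 - r) ^ e' * r ->
  INR (S P0) * (1 - r) ^ S e' <= r ^ S e' * INR m ->
  0 <= y <= INR m -> exists u : nat -> R, (forall i, inC r (u i)) /\ y = ssum (fun i => u i ^ S e') m.
Proof.
  intros Hr Hc HP Hy.
  set (e := S e') in *. set (c := (1 - r) ^ e) in *.
  assert (Hc0 : 0 < c) by (apply pow_lt; lra).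
  assert (Hc1 : c <= 1 - r) by (unfold c, e; simpl; pose proof (pow_le1 (1 - r) e' ltac:(lra)); pose proof (pow_le (1-r) e' ltac:(lra)); nra).
  assert (HrP : 1 - r <= INR (S P0) * r).
  { rewrite S_INR. pose proof (pow_le1 (1 - r) e' ltac:(lra)). pose proof (pos_INR P0).
    assert (INR P0 * (1 - r) ^ e' * r <= INR P0 * r) by (apply Rmult_le_compat_r; [lra| nra]). lra. }
  assert (Hre : 0 < r ^ e) by (apply pow_lt; lra).
  assert (Hre1 : r ^ e < c) by (unfold c, e; apply pow_lt_base; lra).
  assert (Hre2 : r ^ e < 1).
  { unfold e. simpl. pose proof (pow_le1 r e' ltac:(lra)). pose proof (pow_le r e' ltac:(lra)). nra. }
  destruct (Req_dec y 0) as [Hy0|Hy0].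
  { exists (fun _ => 0). split; [intros; apply inC_0|].
    rewrite (ssum_ext _ (fun _ => 0)) by (intros; unfold e; simpl; ring). rewrite ssum_const. lra. }
  destruct (scale_find (r ^ e) (INR m) y ltac:(lra) ltac:(lra)) as [n [Hn1 Hn2]].
  set (q := (r ^ e) ^ n) in *.
  assert (Hq : 0 < q) by (apply pow_lt; lra).
  set (Y := y / q).
  assert (HY1 : Y <= INR m).
  { unfold Y. apply (Rmult_le_reg_r q); auto. unfold Rdiv. rewrite (Rmult_assoc y), Rinv_l by lra. lra. }
  assert (HY2 : r ^ e * INR m < Y).
  { unfold Y. apply (Rmult_lt_reg_r q); auto. unfold Rdiv. rewrite (Rmult_assoc y), Rinv_l by lra.
    change ((r ^ e) ^ S n) with (r ^ e * (r ^ e) ^ n) in Hn1. fold q in Hn1. replace (r ^ e * INR m * q) with (r ^ e * q * INR m) by ring. lra. }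
  assert (HPm' : (S P0 <= m)%nat).
  { assert (INR (S P0) < INR m + 1).
    { assert (INR (S P0) * c < INR m * c) by (pose proof (pos_INR m); nra).
      apply Rmult_lt_reg_r in H; lra. }
    assert (INR (S P0) < INR (S m)) by (rewrite (S_INR m); lra). apply INR_lt in H0. lia. }
  destruct (pick_p c Y (S P0) m) as [p [Hp1 Hp2]]; auto; try lra.
  { intros q0 Hq0. apply le_INR in Hq0. pose proof (pos_INR q0). assert (1 - r <= INR q0 * r) by nra. assert ((INR q0 + 1) * c <= (INR q0 + 1) * (1 - r)) by (apply Rmult_le_compat_l; lra). nra. }
  destruct p as [|p0]; [lia|].
  destruct (mach r e' (true :: nil) p0 Y Hr) as [u [Hu1 [Hu2 Hu3]]].
  - unfold Lw; simpl; unfold f1.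
    replace (r * 0 + 1 - r) with (1 - r) by ring.
    assert (INR P0 <= INR p0) by (apply le_INR; lia).
    pose proof (pow_le (1 - r) e' ltac:(lra)). assert (INR P0 * (1-r)^e' * r <= INR p0 * (1-r)^e' * r) by (apply Rmult_le_compat_r; [lra| apply Rmult_le_compat_r; lra]). lra.
  - replace (Lw r (true :: nil)) with (1 - r) by (unfold Lw; simpl; unfold f1; ring).
    replace (r ^ length (true :: nil)) with r by (simpl; ring). replace (1 - r + r) with 1 by ring.
    rewrite pow1. fold e c. lra.
  - exists (fun i => r ^ n * u i). split.
    + intros i. apply inC_scale_pow; auto; lra.
    + rewrite (ssum_ext _ (fun i => q * u i ^ e)).
      * rewrite ssum_scale. rewrite (ssum_tail _ (S p0) m) by (first [lia | intros i Hi; rewrite Hu2 by auto; unfold e; simpl; ring]).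
        fold e in Hu3. rewrite <- Hu3. unfold Y. field. lra.
      * intros i _. rewrite Rpow_mult_distr. unfold q. rewrite <- !pow_mult. rewrite Nat.mul_comm. reflexivity.
Qed.

Lemma poly_c t : 1 <= t -> t * t <= t + 1 ->
  (2 * t^3 + (t*t - t) * (t+1)^2)^2 <= 2 * (t+1)^5.
Proof.
  intros H1 H2.
  set (w := t + 1 - t * t).
  set (Q := -1 + 6*t + 12*t^2 + 12*t^3 + 15*t^4 + 7*t^5 + t^6).
  assert (E: 2 * (t+1)^5 - (2 * t^3 + (t*t - t) * (t+1)^2)^2 = Q * w + 5 * t + 3) by (unfold Q, w; ring).
  assert (HQ: 0 <= Q).
  { unfold Q. assert (0 <= t^2) by (apply pow_le; lra). assert (0 <= t^3) by (apply pow_le; lra).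
    assert (0 <= t^4) by (apply pow_le; lra). assert (0 <= t^5) by (apply pow_le; lra). assert (0 <= t^6) by (apply pow_le; lra). lra. }
  assert (0 <= w) by (unfold w; lra).
  assert (0 <= Q * w) by (apply Rmult_le_pos; auto). lra.
Qed.

Lemma ineq_t t e' s M : 1 < t -> (1 <= e')%nat -> (2 * S e' <= s)%nat ->
  2 * t ^ (s - 1) <= M -> t ^ s <= M -> ((t+1)/t) ^ (s-1) + 1 <= M ->
  2 * t ^ S e' + t * (t - 1) * (t + 1) ^ e' <= M.
Proof.
  intros Ht He Hs H1 H2 H3.
  assert (H1' : 2 * t ^ (2 * e' + 1) <= M).
  { pose proof (Rle_pow t (2 * e' + 1) (s - 1) ltac:(lra) ltac:(lia)). lra. }
  assert (H2' : t ^ (2 * e' + 2) <= M).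
  { pose proof (Rle_pow t (2 * e' + 2) s ltac:(lra) ltac:(lia)). lra. }
  assert (Hx1 : 1 <= (t+1)/t) by (apply (Rmult_le_reg_r t); [lra|]; unfold Rdiv; rewrite Rmult_assoc, Rinv_l; lra).
  assert (H3' : ((t+1)/t) ^ (2 * e' + 1) <= M).
  { pose proof (Rle_pow ((t+1)/t) (2 * e' + 1) (s - 1) Hx1 ltac:(lia)). lra. }
  set (T1 := t ^ e').
  assert (HT1 : t <= T1) by (unfold T1; rewrite <- (pow_1 t) at 1; apply Rle_pow; lra || lia).
  assert (E1 : t ^ (2 * e' + 1) = t * (T1 * T1)) by (unfold T1; replace (2 * e' + 1)%nat with (S (e' + e')) by lia; simpl; rewrite pow_add; ring).
  assert (E2 : t ^ (2 * e' + 2) = t * t * (T1 * T1)) by (unfold T1; replace (2 * e' + 2)%nat with (S (S (e' + e'))) by lia; simpl; rewrite pow_add; ring).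
  assert (E3 : t ^ S e' = t * T1) by (unfold T1; reflexivity).
  rewrite E1 in H1'. rewrite E2 in H2'. rewrite E3.
  set (U := (t + 1) ^ e') in *.
  assert (HU0 : 0 <= U) by (apply pow_le; lra).
  destruct (Rle_or_lt (t + 1) (t * t)) as [Hphi|Hphi].
  -
    assert (HU : U <= T1 * T1) by (unfold U, T1; rewrite <- Rpow_mult_distr; apply pow_incr; lra).
    assert (0 <= t * (t - 1)) by nra.
    assert (t * (t - 1) * U <= t * (t - 1) * (T1 * T1)) by (apply Rmult_le_compat_l; auto).
    destruct (Rle_or_lt 2 t) as [Ht2|Ht2].
    + assert (2 <= T1) by lra. nra.
    + assert (2 <= t * (3 - t)) by nra.
      assert (2 <= T1 * (3 - t)) by nra. nra.
  -
    destruct (Nat.eq_dec e' 1) as [He1|He1].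
    + subst e'. unfold U, T1 in *. simpl in *. assert (0 <= t*((t-1)*(t-1))) by (apply Rmult_le_pos; nra). nra.
    + set (V := (t / (t + 1)) ^ e').
      assert (Hr0 : 0 <= t / (t+1) <= 1).
      { split; [apply Rlt_le, Rdiv_lt_0_compat; lra|]. apply (Rmult_le_reg_r (t+1)); [lra|].
        unfold Rdiv; rewrite Rmult_assoc, Rinv_l; lra. }
      assert (HV : V <= (t / (t+1)) ^ 2) by (unfold V; apply pow_anti; lra || lia).
      assert (HV0 : 0 <= V) by (unfold V; apply pow_le; lra).
      assert (ET : T1 = V * U).
      { unfold T1, V, U. rewrite <- Rpow_mult_distr. f_equal. field. lra. }
      set (f := 2 * t * (t / (t+1)) ^ 2 + t * (t - 1)).
      assert (HN : 2 * (t * T1) + t * (t - 1) * U <= U * f).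
      { rewrite ET. unfold f. assert (0 <= 2 * t * U) by nra.
        assert (2 * t * U * V <= 2 * t * U * (t / (t+1)) ^ 2) by (apply Rmult_le_compat_l; auto). nra. }
      assert (Hf : f * f <= 2 * (t + 1)).
      { assert (EG : f * (t+1)^2 = 2 * t^3 + (t*t - t) * (t+1)^2) by (unfold f; field; lra).
        pose proof (poly_c t ltac:(lra) ltac:(lra)) as P.
        rewrite <- EG in P.
        assert (Hp : 0 < (t+1)^4) by (apply pow_lt; lra).
        replace ((f * (t + 1) ^ 2) ^ 2) with (f * f * (t+1)^4) in P by ring.
        replace (2 * (t + 1) ^ 5) with (2 * (t+1) * (t+1)^4) in P by ring.
        apply Rmult_le_reg_r in P; auto. }
      set (X := ((t + 1) / t) ^ (2 * e' + 1)).
      assert (EX : X * (t * (T1 * T1)) = (t + 1) * (U * U)).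
      { unfold X, T1, U. replace (2 * e' + 1)%nat with (S (e' + e')) by lia. simpl. rewrite pow_add.
        replace ((t + 1) ^ e') with (((t+1)/t) ^ e' * t ^ e') by (rewrite <- Rpow_mult_distr; f_equal; field; lra).
        field. lra. }
      assert (HX0 : 0 <= X) by (unfold X; apply pow_le; lra).
      assert (HM0 : 0 <= M) by (assert (0 <= t*(T1*T1)) by (apply Rmult_le_pos; nra); lra).
      assert (HMM : 2 * (t + 1) * (U * U) <= M * M).
      { assert (0 <= t*(T1*T1)) by (apply Rmult_le_pos; nra). assert (X * (2 * (t * (T1 * T1))) <= M * M) by (apply Rmult_le_compat; unfold X in *; lra). replace (X * (2 * (t * (T1 * T1)))) with (2 * (X * (t * (T1 * T1)))) in H0 by ring. rewrite EX in H0. lra. }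
      assert (Hf0 : 0 <= f).
      { unfold f. assert (0 <= (t / (t+1))^2) by (apply pow_le; lra). nra. }
      assert (HUf : (U * f) * (U * f) <= M * M).
      { assert (U * U * (f * f) <= U * U * (2 * (t+1))) by (apply Rmult_le_compat_l; nra). nra. }
      assert (U * f <= M) by nra. lra.
Qed.

Lemma core_all r e' s j y : 0 < r < 1/2 -> (2 * S e' <= s)%nat ->
  2 * ((1 - r) / r) ^ (s - 1) <= INR j -> ((1 - r) / r) ^ s <= INR j ->
  (1 / (1 - r)) ^ (s - 1) + 1 <= INR j ->
  0 <= y <= INR j -> exists u : nat -> R, (forall i, inC r (u i)) /\ y = ssum (fun i => u i ^ S e') j.
Proof.
  intros Hr Hs H1 H2 H3 Hy.
  set (t := (1 - r) / r) in *.
  assert (Ht : 1 < t) by (unfold t; apply (Rmult_lt_reg_r r); [lra|]; unfold Rdiv; rewrite Rmult_assoc, Rinv_l; lra).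
  assert (Htr : t * r = 1 - r) by (unfold t; field; lra).
  assert (Hj : t <= INR j).
  { pose proof (Rle_pow t 1 s ltac:(lra) ltac:(lia)). rewrite pow_1 in H. lra. }
  destruct e' as [|e''].
  - apply core_e1; auto.
    + assert (1 < INR j) by lra. destruct j; [simpl in H; lra| lia].
    + nra.
  - set (e' := S e'') in *.
    set (A := (1 - 2 * r) / ((1 - r) ^ e' * r)).
    assert (Hpe : 0 < (1 - r) ^ e') by (apply pow_lt; lra).
    assert (HA : 0 < A) by (unfold A; apply Rdiv_lt_0_compat; [lra| apply Rmult_lt_0_compat; lra]).
    destruct (archimed A) as [Hup1 Hup2].
    assert (Hup0 : (0 <= up A)%Z) by (apply le_IZR; lra).
    set (P0 := Z.to_nat (up A)).
    assert (HP0 : INR P0 = IZR (up A)) by (unfold P0; rewrite INR_IZR_INZ, Z2Nat.id; auto).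
    apply (core_e2 r e' P0 j y Hr); auto.
    + rewrite HP0.
      assert (A * ((1 - r) ^ e' * r) = 1 - 2 * r) by (unfold A; field; lra).
      assert (0 < (1 - r) ^ e' * r) by (apply Rmult_lt_0_compat; lra).
      rewrite Rmult_assoc.
      assert (A * ((1 - r) ^ e' * r) <= IZR (up A) * ((1 - r) ^ e' * r)) by (apply Rmult_le_compat_r; lra).
      lra.
    + assert (Hineq := ineq_t t e' s (INR j) Ht ltac:(unfold e'; lia) Hs H1 H2).
      assert (E1 : 1 / (1 - r) = (t + 1) / t) by (unfold t; field; lra).
      rewrite E1 in H3. specialize (Hineq H3).
      assert (Hre : 0 < r ^ S e') by (apply pow_lt; lra).
      apply (Rmult_le_compat_l (r ^ S e')) in Hineq; [|lra].
      assert (E2 : r ^ S e' * (2 * t ^ S e' + t * (t - 1) * (t + 1) ^ e') = 2 * (1 - r) ^ S e' + t * (t - 1) * r).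
      { rewrite Rmult_plus_distr_l.
        replace (r ^ S e' * (2 * t ^ S e')) with (2 * (r * t) ^ S e') by (rewrite Rpow_mult_distr; ring).
        replace (r ^ S e' * (t * (t - 1) * (t + 1) ^ e')) with (t * (t - 1) * r * (r * (t + 1)) ^ e') by (rewrite Rpow_mult_distr; simpl; ring).
        replace (r * (t + 1)) with 1 by (unfold t; field; lra). rewrite pow1.
        replace (r * t) with (1 - r) by lra. ring. }
      rewrite E2 in Hineq.
      assert (HS : INR (S P0) <= A + 2) by (rewrite S_INR, HP0; lra).
      assert (E3 : A * (1 - r) ^ S e' = t * (t - 1) * r).
      { unfold A. simpl. replace (t * (t - 1) * r) with ((1 - 2 * r) * (1 - r) / r) by (unfold t; field; lra). field. split; [lra| split; [apply Rgt_not_eq, pow_lt; lra| lra]]. }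
      assert (Hp : 0 < (1 - r) ^ S e') by (apply pow_lt; lra).
      assert (INR (S P0) * (1 - r) ^ S e' <= (A + 2) * (1 - r) ^ S e') by (apply Rmult_le_compat_r; lra).
      lra.
Qed.

Lemma Rceil_ge x : x <= IZR (Rceil x).
Proof.
  unfold Rceil, Rfloor. destruct (archimed (- x)) as [H1 H2].
  rewrite opp_IZR, minus_IZR. simpl (IZR 1). lra.
Qed.

Lemma Rfloor_nonneg z : 0 <= z -> (0 <= Rfloor z)%Z.
Proof.
  intros Hz. unfold Rfloor. destruct (archimed z) as [H1 _].
  assert (0 < up z)%Z by (apply lt_IZR; lra). lia.
Qed.

Lemma pair_sum_range x a b m : (forall i, (i < 2 * m)%nat -> 0 <= x i <= 1) ->
  0 <= pair_sum x a b m <= INR m.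
Proof.
  induction m; intros H; [simpl; lra|].
  change (pair_sum x a b (S m)) with (pair_sum x a b m + x (2*m)%nat ^ a * x (2*m+1)%nat ^ b).
  assert (IH := IHm ltac:(intros; apply H; lia)).
  destruct (H (2 * m)%nat ltac:(lia)). destruct (H (2 * m + 1)%nat ltac:(lia)).
  assert (0 <= x (2 * m)%nat ^ a) by (apply pow_le; lra).
  assert (x (2 * m)%nat ^ a <= 1) by (apply pow_le1; lra).
  assert (0 <= x (2 * m + 1)%nat ^ b) by (apply pow_le; lra).
  assert (x (2 * m + 1)%nat ^ b <= 1) by (apply pow_le1; lra).
  assert (0 <= x (2 * m)%nat ^ a * x (2 * m + 1)%nat ^ b) by (apply Rmult_le_pos; lra).
  assert (x (2 * m)%nat ^ a * x (2 * m + 1)%nat ^ b <= 1 * 1) by (apply Rmult_le_compat; lra).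
  rewrite S_INR. split; lra.
Qed.

Lemma pair_sum_u1 u a b m : pair_sum (fun i => if Nat.even i then u (Nat.div2 i) else 1) a b m = ssum (fun i => u i ^ a) m.
Proof.
  induction m; [reflexivity|].
  change (pair_sum (fun i => if Nat.even i then u (Nat.div2 i) else 1) a b (S m)) with
    (pair_sum (fun i => if Nat.even i then u (Nat.div2 i) else 1) a b m +
     (if Nat.even (2*m) then u (Nat.div2 (2*m)) else 1) ^ a * (if Nat.even (2*m+1) then u (Nat.div2 (2*m+1)) else 1) ^ b).
  change (ssum (fun i => u i ^ a) (S m)) with (ssum (fun i => u i ^ a) m + u m ^ a).
  rewrite IHm. rewrite Nat.even_even, Nat.even_odd, Nat.div2_double. rewrite pow1. ring.
Qed.

Lemma pair_sum_u2 u a b m : pair_sum (fun i => if Nat.even i then 1 else u (Nat.div2 i)) a b m = ssum (fun i => u i ^ b) m.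
Proof.
  induction m; [reflexivity|].
  change (pair_sum (fun i => if Nat.even i then 1 else u (Nat.div2 i)) a b (S m)) with
    (pair_sum (fun i => if Nat.even i then 1 else u (Nat.div2 i)) a b m +
     (if Nat.even (2*m) then 1 else u (Nat.div2 (2*m))) ^ a * (if Nat.even (2*m+1) then 1 else u (Nat.div2 (2*m+1))) ^ b).
  change (ssum (fun i => u i ^ b) (S m)) with (ssum (fun i => u i ^ b) m + u m ^ b).
  rewrite IHm. rewrite Nat.even_even, Nat.even_odd, Nat.div2_odd'. rewrite pow1. ring.
Qed.

Theorem mainTheorem3 (alpha : R) (a b : nat) :
  1 < alpha -> (1 <= a)%nat -> (1 <= b)%nat ->
  let r := ratio alpha in
  let s := (a + b)%nat in
  let n' := (Rfloor (- logb r (INR s - 1)) + 1)%Z in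
  let q := 1 - r + powerRZ r n' in
  forall k : nat, (0 < k)%nat -> Nat.Even k ->
    INR k >= IZR (Rceil (2 * (q ^ (s - 2) * (q + (INR s - 1)))
                           / ((1 - r) ^ (s - 2) * ((1 - r) + (INR s - 1) * (1 - powerRZ r n')))
                         + 2))
             * ((1 - r) / r) ^ (s - 1) ->
    INR k >= 2 * ((1 - r) / r) ^ s ->
    INR k >= 2 * (1 / (1 - r)) ^ (s - 1) + 2 ->
    forall y : R,
      (0 <= y <= INR k / 2) <->
      (exists x : nat -> R,
          (forall i, (i < k)%nat -> Cantor alpha (x i)) /\
          y = pair_sum x a b (k / 2)).
Proof.
  intros Halpha Ha Hb r s n' q k Hk [j Hj] H1 H2 H3 y.
  assert (Hr : 0 < r < 1/2).
  { unfold r, ratio. assert (0 < 1 / alpha < 1).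
    { split; [apply Rdiv_lt_0_compat; lra|]. apply (Rmult_lt_reg_r alpha); [lra|].
      unfold Rdiv. rewrite Rmult_assoc, Rinv_l; lra. }
    lra. }
  assert (Hr1 : 0 < r < 1) by lra.
  subst k. replace ((2 * j) / 2)%nat with j by (rewrite Nat.mul_comm, Nat.div_mul; lia).
  rewrite mult_INR in H1, H2, H3 |- *. replace (INR 2) with 2 in * by (simpl; ring).
  replace (2 * INR j / 2) with (INR j) by field.
  split.
  - intros Hy.
    set (t := (1 - r) / r).
    assert (Ht : 1 < t) by (unfold t; apply (Rmult_lt_reg_r r); [lra|]; unfold Rdiv; rewrite Rmult_assoc, Rinv_l; lra).
    assert (Hs2 : (2 <= s)%nat) by (unfold s; lia).
    (* the ceiling hypothesis gives 4 t^(s-1) <= 2j *)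
    assert (H1' : 2 * t ^ (s - 1) <= INR j).
    {
      assert (Hn1 : (1 <= n')%Z).
      { unfold n'. assert (0 <= Rfloor (- logb r (INR s - 1)))%Z; [|lia].
        apply Rfloor_nonneg. unfold logb.
        assert (HS1 : 1 <= INR s - 1).
        { assert (2 <= INR s) by (replace 2 with (INR 2) by reflexivity; apply le_INR; lia). lra. }
        assert (0 <= ln (INR s - 1)).
        { destruct (Req_dec (INR s - 1) 1) as [E|E]; [rewrite E, ln_1; lra|].
          rewrite <- ln_1. left. apply ln_increasing; lra. }
        assert (ln r < 0) by (rewrite <- ln_1; apply ln_increasing; lra).
        assert (ln (INR s - 1) / ln r <= 0).
        { unfold Rdiv. assert (/ ln r < 0) by (apply Rinv_lt_0_compat; lra). nra. }
        lra. }
      set (N := Z.to_nat n').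
      assert (HN : powerRZ r n' = r ^ N) by (unfold N; rewrite pow_powerRZ, Z2Nat.id; auto; lia).
      assert (HN1 : (1 <= N)%nat) by (unfold N; lia).
      assert (HrN : 0 < r ^ N <= r).
      { split; [apply pow_lt; lra|]. rewrite <- (pow_1 r) at 2. apply pow_anti; lra || lia. }
      assert (HS1 : 1 <= INR s - 1).
      { assert (2 <= INR s) by (replace 2 with (INR 2) by reflexivity; apply le_INR; lia). lra. }
      set (X := 2 * (q ^ (s - 2) * (q + (INR s - 1))) / ((1 - r) ^ (s - 2) * ((1 - r) + (INR s - 1) * (1 - powerRZ r n'))) + 2).
      assert (HX : 4 <= X).
      { unfold X. rewrite HN. unfold q. rewrite HN.
        set (c := (1 - r) ^ (s - 2)).
        assert (Hc : 0 < c) by (apply pow_lt; lra).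
        assert (Hqc : c <= (1 - r + r ^ N) ^ (s - 2)) by (apply pow_incr; lra).
        set (D := c * ((1 - r) + (INR s - 1) * (1 - r ^ N))).
        assert (HD : 0 < D) by (unfold D; apply Rmult_lt_0_compat; nra).
        assert (HDn : D <= (1 - r + r ^ N) ^ (s - 2) * (1 - r + r ^ N + (INR s - 1))).
        { unfold D. apply Rmult_le_compat; nra. }
        assert (2 * D <= 2 * ((1 - r + r ^ N) ^ (s - 2) * (1 - r + r ^ N + (INR s - 1)))) by lra.
        assert (2 <= 2 * ((1 - r + r ^ N) ^ (s - 2) * (1 - r + r ^ N + (INR s - 1))) / D).
        { apply (Rmult_le_reg_r D); auto. unfold Rdiv. rewrite Rmult_assoc, Rinv_l by lra. lra. }
        lra. }
      pose proof (Rceil_ge X) as HcX. fold X in H1.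
      assert (Htp : 0 < t ^ (s - 1)) by (apply pow_lt; lra).
      fold t in H1.
      assert (4 * t ^ (s - 1) <= IZR (Rceil X) * t ^ (s - 1)) by (apply Rmult_le_compat_r; lra).
      lra. }
    assert (H2' : t ^ s <= INR j) by (unfold t; lra).
    assert (H3' : (1 / (1 - r)) ^ (s - 1) + 1 <= INR j) by lra.
    destruct (Nat.le_gt_cases a b) as [Hab|Hab].
    + assert (Ea : a = S (a - 1)) by lia.
      destruct (core_all r (a - 1) s j y Hr ltac:(unfold s; lia) H1' H2' H3' Hy) as [u [Hu1 Hu2]].
      rewrite <- Ea in Hu2.
      exists (fun i => if Nat.even i then u (Nat.div2 i) else 1). split.
      * intros i _ n _. destruct (Nat.even i); [apply Hu1| apply inC_1].
      * rewrite pair_sum_u1. exact Hu2.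
    + assert (Eb : b = S (b - 1)) by lia.
      destruct (core_all r (b - 1) s j y Hr ltac:(unfold s; lia) H1' H2' H3' Hy) as [u [Hu1 Hu2]].
      rewrite <- Eb in Hu2.
      exists (fun i => if Nat.even i then 1 else u (Nat.div2 i)). split.
      * intros i _ n _. destruct (Nat.even i); [apply inC_1| apply Hu1].
      * rewrite pair_sum_u2. exact Hu2.
  - intros [x [Hx ->]]. apply pair_sum_range. intros i Hi.
    destruct (Hx i Hi 1%nat (Nat.le_refl 1)) as [w [Hl [z [Hz Hxz]]]].
    rewrite Hxz. apply fw_range; auto.
Qed.
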